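(* Equip $S^1\times D^3$ (coordinates $\theta\in\mathbb{R}/2\pi\mathbb{Z}$, $x=(x_1,x_2,x_3)\in D^3$) with the product of the standard metric on $S^1$ and the flat metric on $D^3$, and write $\alpha_1=d\theta\, dx_1+dx_2\, dx_3$, $\alpha_2=d\theta\, dx_2+dx_3\, dx_1$, $\alpha_3=d\theta\, dx_3+dx_1\, dx_2$. Then there exist self-dual harmonic 2-forms for this metric, vanishing exactly along $S^1\times\{0\}$ with nondegenerate linear part, realizing both types of splittings. Namely: (A) $\omega_A=x_1\alpha_1+x_2\alpha_2-2x_3\alpha_3=*_3\mu+d\theta\wedge\mu$, where $\mu=d\big(\tfrac12(x_1^2+x_2^2)-x_3^2\big)$ and $*_3$ is the Hodge star of the flat metric on $D^3$, is a self-dual harmonic 2-form with $(L_{ij}(\theta))=\mathrm{diag}(1,1,-2)$, whose splitting is the oriented one; (B) for any $0<R<1$, $$\omega_B=(x_1\cos\theta+x_2\sin\theta)e^{x_3}\alpha_1+(x_1\sin\theta-x_2\cos\theta)e^{x_3}\alpha_2+R(-x_1\alpha_1+x_3\alpha_3)$$ is a self-dual harmonic 2-form with $$(L_{ij}(\theta))=\begin{pmatrix}\cos\theta-R&\sin\theta&0\\ \sin\theta&-\cos\theta&0\\ 0&0&R\end{pmatrix},$$ whose splitting is the unoriented one.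
   Context: For a 2-form $\omega=\sum_{i}L_i(\theta,x)\alpha_i+Q$ vanishing on $S^1\times\{0\}$, with $L_i=\sum_j L_{ij}(\theta)x_j$ and $Q$ of order at least two in $x$, the matrix $(L_{ij}(\theta))$ is (for closed $\omega$) symmetric and traceless; when it is nondegenerate, two of its eigenvalues have one sign and the third has the opposite sign for all $\theta$. The associated splitting of $\mathbb{R}^3\times S^1\to S^1$ is into the line bundle spanned by the eigenvector of the eigenvalue of the sign occurring once, and the rank 2 bundle spanned by the other two eigenvectors. The splitting is called oriented if this line bundle is orientable (trivial) and unoriented otherwise. *)

(* Defs.v *)
From Stdlib Require Import Reals List.
From Coquelicot Require Import Coquelicot.
Open Scope R_scope.

(* Functions of the coordinates (theta, x1, x2, x3) on R x R^3; a form on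
   S^1 x D^3 is represented by its lift, which is required to be
   2*PI-periodic in theta. *)
Definition fn4 := R -> R -> R -> R -> R.

(* Partial derivative in coordinate k (0 = theta, 1,2,3 = x1,x2,x3). *)
Definition pd (k : nat) (f : fn4) : fn4 :=
  fun a b c d =>
    match k with
    | O => Derive (fun t => f t b c d) a
    | 1%nat => Derive (fun t => f a t c d) b
    | 2%nat => Derive (fun t => f a b t d) c
    | _ => Derive (fun t => f a b c t) d
    end.

Definition ex_pd (k : nat) (f : fn4) (a b c d : R) : Prop :=
  match k with
  | O => ex_derive (fun t => f t b c d) a
  | 1%nat => ex_derive (fun t => f a t c d) b
  | 2%nat => ex_derive (fun t => f a b t d) c
  | _ => ex_derive (fun t => f a b c t) d
  end.

Definition inD3 (x1 x2 x3 : R) : Prop := x1 ^ 2 + x2 ^ 2 + x3 ^ 2 <= 1.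

Definition smooth_fn (f : fn4) : Prop :=
  forall (ks : list nat) (k : nat) th x1 x2 x3, inD3 x1 x2 x3 ->
    ex_pd k (fold_right pd f ks) th x1 x2 x3.

(* A 2-form  c01 dth^dx1 + c02 dth^dx2 + c03 dth^dx3
             + c23 dx2^dx3 + c31 dx3^dx1 + c12 dx1^dx2. *)
Record form2 := mkForm2 {
  c01 : fn4; c02 : fn4; c03 : fn4; c23 : fn4; c31 : fn4; c12 : fn4 }.

Definition components (w : form2) : list fn4 :=
  c01 w :: c02 w :: c03 w :: c23 w :: c31 w :: c12 w :: nil.

(* sum_i f_i alpha_i, with alpha_1 = dth dx1 + dx2 dx3, etc. *)
Definition alpha_comb (f1 f2 f3 : fn4) : form2 := mkForm2 f1 f2 f3 f1 f2 f3.

(* Hodge star of the product metric dth^2 + dx1^2 + dx2^2 + dx3^2,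
   orientation dth dx1 dx2 dx3. *)
Definition hodge (w : form2) : form2 :=
  mkForm2 (c23 w) (c31 w) (c12 w) (c01 w) (c02 w) (c03 w).

Definition periodic_form (w : form2) : Prop :=
  forall f, In f (components w) -> forall th x1 x2 x3, f (th + 2 * PI) x1 x2 x3 = f th x1 x2 x3.

Definition smooth_form (w : form2) : Prop :=
  forall f, In f (components w) -> smooth_fn f.

Definition self_dual (w : form2) : Prop :=
  forall th x1 x2 x3, inD3 x1 x2 x3 ->
    c01 (hodge w) th x1 x2 x3 = c01 w th x1 x2 x3 /\
    c02 (hodge w) th x1 x2 x3 = c02 w th x1 x2 x3 /\
    c03 (hodge w) th x1 x2 x3 = c03 w th x1 x2 x3 /\
    c23 (hodge w) th x1 x2 x3 = c23 w th x1 x2 x3 /\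
    c31 (hodge w) th x1 x2 x3 = c31 w th x1 x2 x3 /\
    c12 (hodge w) th x1 x2 x3 = c12 w th x1 x2 x3.

(* d w = 0 (components dth dx1 dx2, dth dx1 dx3, dth dx2 dx3, dx1 dx2 dx3),
   using c13 = - c31. *)
Definition closed_form (w : form2) : Prop :=
  forall th x1 x2 x3, inD3 x1 x2 x3 ->
    pd 0 (c12 w) th x1 x2 x3 - pd 1 (c02 w) th x1 x2 x3 + pd 2 (c01 w) th x1 x2 x3 = 0 /\
    - pd 0 (c31 w) th x1 x2 x3 - pd 1 (c03 w) th x1 x2 x3 + pd 3 (c01 w) th x1 x2 x3 = 0 /\
    pd 0 (c23 w) th x1 x2 x3 - pd 2 (c03 w) th x1 x2 x3 + pd 3 (c02 w) th x1 x2 x3 = 0 /\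
    pd 1 (c23 w) th x1 x2 x3 + pd 2 (c31 w) th x1 x2 x3 + pd 3 (c12 w) th x1 x2 x3 = 0.

Definition harmonic (w : form2) : Prop := closed_form w /\ closed_form (hodge w).

Definition vanishes_exactly_on_core (w : form2) : Prop :=
  forall th x1 x2 x3, inD3 x1 x2 x3 ->
    ((forall f, In f (components w) -> f th x1 x2 x3 = 0) <->
     (x1 = 0 /\ x2 = 0 /\ x3 = 0)).

Definition mat3 := nat -> nat -> R.
Definition vec3 := nat -> R.

Definition det3 (M : mat3) : R :=
  M 0%nat 0%nat * (M 1%nat 1%nat * M 2%nat 2%nat - M 1%nat 2%nat * M 2%nat 1%nat)
  - M 0%nat 1%nat * (M 1%nat 0%nat * M 2%nat 2%nat - M 1%nat 2%nat * M 2%nat 0%nat)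
  + M 0%nat 2%nat * (M 1%nat 0%nat * M 2%nat 1%nat - M 1%nat 1%nat * M 2%nat 0%nat).

(* Coefficient f_i of alpha_i (i = 0,1,2 for alpha_1, alpha_2, alpha_3)
   of a self-dual form  w = sum_i f_i alpha_i. *)
Definition coef (w : form2) (i : nat) : fn4 :=
  match i with O => c01 w | 1%nat => c02 w | _ => c03 w end.

(* Linear part: L_i = sum_j L_ij(th) x_j, i.e. L_ij(th) = d f_i / d x_j at x = 0. *)
Definition Lmat (w : form2) (th : R) : mat3 :=
  fun i j => pd (S j) (coef w i) th 0 0 0.

Definition nondegenerate_linear_part (w : form2) : Prop :=
  forall th, det3 (Lmat w th) <> 0.

Definition mv (M : mat3) (v : vec3) (i : nat) : R :=
  M i 0%nat * v 0%nat + M i 1%nat * v 1%nat + M i 2%nat * v 2%nat.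

Definition nonzero3 (v : vec3) : Prop := v 0%nat <> 0 \/ v 1%nat <> 0 \/ v 2%nat <> 0.

Definition eigpair (M : mat3) (lam : R) (v : vec3) : Prop :=
  nonzero3 v /\ forall i, (i < 3)%nat -> mv M v i = lam * v i.

Definition det3cols (u v w : vec3) : R :=
  det3 (fun i j => match j with O => u i | 1%nat => v i | _ => w i end).

(* lam is the eigenvalue whose sign occurs once, with eigenvector v:
   there is an eigenbasis v, w1, w2 where w1, w2 have eigenvalues of the
   opposite sign. *)
Definition single_sign_eig (M : mat3) (lam : R) (v : vec3) : Prop :=
  eigpair M lam v /\
  exists mu1 mu2 (w1 w2 : vec3),
    eigpair M mu1 w1 /\ eigpair M mu2 w2 /\ mu1 * lam < 0 /\ mu2 * lam < 0 /\
    det3cols v w1 w2 <> 0.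

Definition splitting_defined (L : R -> mat3) : Prop :=
  forall th, exists lam v, single_sign_eig (L th) lam v.

(* The line bundle over S^1 = R/2piZ is trivial: it has a continuous,
   nowhere-vanishing, 2pi-periodic section. *)
Definition line_bundle_trivial (L : R -> mat3) : Prop :=
  exists v : R -> vec3,
    (forall i, (i < 3)%nat -> continuity (fun t => v t i)) /\
    (forall t i, v (t + 2 * PI) i = v t i) /\
    (forall t, exists lam, single_sign_eig (L t) lam (v t)).

Definition oriented_splitting (L : R -> mat3) : Prop :=
  splitting_defined L /\ line_bundle_trivial L.

Definition unoriented_splitting (L : R -> mat3) : Prop :=
  splitting_defined L /\ ~ line_bundle_trivial L.

Definition good_form (w : form2) : Prop :=
  periodic_form w /\ smooth_form w /\ self_dual w /\ harmonic w /\
  vanishes_exactly_on_core w /\ nondegenerate_linear_part w.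

Definition omegaA : form2 :=
  alpha_comb (fun _ x1 _ _ => x1) (fun _ _ x2 _ => x2) (fun _ _ _ x3 => -2 * x3).

Definition muA_pot : fn4 := fun _ x1 x2 x3 => (x1 ^ 2 + x2 ^ 2) / 2 - x3 ^ 2.

(* *_3 (dg) + dth ^ dg for g a function of x only. *)
Definition star3_plus_dth (g : fn4) : form2 :=
  mkForm2 (pd 1 g) (pd 2 g) (pd 3 g) (pd 1 g) (pd 2 g) (pd 3 g).

Definition LA (th : R) : mat3 :=
  fun i j => match i, j with
             | O, O => 1 | 1%nat, 1%nat => 1 | 2%nat, 2%nat => -2 | _, _ => 0 end.

Definition omegaB (Rr : R) : form2 :=
  alpha_comb
    (fun th x1 x2 x3 => (x1 * cos th + x2 * sin th) * exp x3 - Rr * x1)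
    (fun th x1 x2 x3 => (x1 * sin th - x2 * cos th) * exp x3)
    (fun _ _ _ x3 => Rr * x3).

Definition LB (Rr : R) (th : R) : mat3 :=
  fun i j => match i, j with
             | O, O => cos th - Rr | O, 1%nat => sin th
             | 1%nat, O => sin th | 1%nat, 1%nat => - cos th
             | 2%nat, 2%nat => Rr | _, _ => 0 end.

(* Main.v *)
Require Import Defs.
From Stdlib Require Import Reals List Lra Lia Psatz.
From Coquelicot Require Import Coquelicot.
Open Scope R_scope.

Inductive tm := TCst (r : R) | TVar (j : nat) | TAdd (a b : tm) | TMul (a b : tm)
  | TOpp (a : tm) | TSin (a : tm) | TCos (a : tm) | TExp (a : tm).

Fixpoint eval (e : tm) (A B C D : R) : R :=
  match e with
  | TCst r => r
  | TVar j => match j with O => A | 1%nat => B | 2%nat => C | _ => D end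
  | TAdd e1 e2 => eval e1 A B C D + eval e2 A B C D
  | TMul e1 e2 => eval e1 A B C D * eval e2 A B C D
  | TOpp e1 => - eval e1 A B C D
  | TSin e1 => sin (eval e1 A B C D)
  | TCos e1 => cos (eval e1 A B C D)
  | TExp e1 => exp (eval e1 A B C D)
  end.

Definition nrm (k : nat) : nat := match k with O => O | 1%nat => 1%nat | 2%nat => 2%nat | _ => 3%nat end.

Fixpoint Dt (k : nat) (e : tm) : tm :=
  match e with
  | TCst _ => TCst 0
  | TVar j => TCst (if Nat.eqb (nrm j) (nrm k) then 1 else 0)
  | TAdd e1 e2 => TAdd (Dt k e1) (Dt k e2)
  | TMul e1 e2 => TAdd (TMul (Dt k e1) e2) (TMul e1 (Dt k e2))
  | TOpp e1 => TOpp (Dt k e1)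
  | TSin e1 => TMul (TCos e1) (Dt k e1)
  | TCos e1 => TMul (TOpp (TSin e1)) (Dt k e1)
  | TExp e1 => TMul (TExp e1) (Dt k e1)
  end.

Definition u0 k (t a : R) := match k with O => t | _ => a end.
Definition u1 k (t a : R) := match k with 1%nat => t | _ => a end.
Definition u2 k (t a : R) := match k with 2%nat => t | _ => a end.
Definition u3 k (t a : R) := match k with O | 1%nat | 2%nat => a | _ => t end.

Lemma eval_deriv e k a b c d x :
  derivable_pt_lim (fun t => eval e (u0 k t a) (u1 k t b) (u2 k t c) (u3 k t d)) x
    (eval (Dt k e) (u0 k x a) (u1 k x b) (u2 k x c) (u3 k x d)).
Proof.
  induction e; simpl.
  - apply derivable_pt_lim_const.
  - destruct j as [|[|[|j]]]; destruct k as [|[|[|k]]]; simpl;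
      first [apply derivable_pt_lim_id | apply derivable_pt_lim_const].
  - apply (derivable_pt_lim_plus _ _ _ _ _ IHe1 IHe2).
  - apply (derivable_pt_lim_mult _ _ _ _ _ IHe1 IHe2).
  - apply (derivable_pt_lim_opp _ _ _ IHe).
  - apply (derivable_pt_lim_comp _ sin _ _ _ IHe (derivable_pt_lim_sin _)).
  - apply (derivable_pt_lim_comp _ cos _ _ _ IHe (derivable_pt_lim_cos _)).
  - apply (derivable_pt_lim_comp _ exp _ _ _ IHe (derivable_pt_lim_exp _)).
Qed.

Lemma pd_eval (f : fn4) e : (forall a b c d, f a b c d = eval e a b c d) ->
  forall k a b c d, pd k f a b c d = eval (Dt k e) a b c d.
Proof.
  intros H k a b c d.
  destruct k as [|[|[|k]]]; simpl pd;
  (erewrite Derive_ext; [|intros; apply H]);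
  apply is_derive_unique; apply is_derive_Reals;
  [exact (eval_deriv e 0 a b c d a) | exact (eval_deriv e 1 a b c d b)
  | exact (eval_deriv e 2 a b c d c) | exact (eval_deriv e (S (S (S k))) a b c d d)].
Qed.

Lemma ex_pd_eval (f : fn4) e : (forall a b c d, f a b c d = eval e a b c d) ->
  forall k a b c d, ex_pd k f a b c d.
Proof.
  intros H k a b c d.
  destruct k as [|[|[|k]]]; simpl ex_pd;
  (eapply ex_derive_ext; [intros; symmetry; apply H|]); eexists; apply is_derive_Reals;
  [exact (eval_deriv e 0 a b c d a) | exact (eval_deriv e 1 a b c d b)
  | exact (eval_deriv e 2 a b c d c) | exact (eval_deriv e (S (S (S k))) a b c d d)].
Qed.

Lemma smooth_eval (f : fn4) e : (forall a b c d, f a b c d = eval e a b c d) -> smooth_fn f.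
Proof.
  intros H.
  assert (G : forall ks, exists e', forall a b c d, fold_right pd f ks a b c d = eval e' a b c d).
  { induction ks as [|k ks [e' IH]]; simpl.
    - exists e; exact H.
    - exists (Dt k e'); intros; apply pd_eval; exact IH. }
  intros ks k th x1 x2 x3 _. destruct (G ks) as [e' He']. eapply ex_pd_eval; exact He'.
Qed.

Definition agree3 (M N : mat3) := forall i j, (i < 3)%nat -> (j < 3)%nat -> M i j = N i j.

Lemma agree_entries M N : agree3 M N ->
  M 0%nat 0%nat = N 0%nat 0%nat /\ M 0%nat 1%nat = N 0%nat 1%nat /\ M 0%nat 2%nat = N 0%nat 2%nat /\
  M 1%nat 0%nat = N 1%nat 0%nat /\ M 1%nat 1%nat = N 1%nat 1%nat /\ M 1%nat 2%nat = N 1%nat 2%nat /\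
  M 2%nat 0%nat = N 2%nat 0%nat /\ M 2%nat 1%nat = N 2%nat 1%nat /\ M 2%nat 2%nat = N 2%nat 2%nat.
Proof. intros H; repeat split; apply H; lia. Qed.

Lemma eigpair_agree M N lam v : agree3 M N -> eigpair M lam v -> eigpair N lam v.
Proof.
  intros H [Hn He]; split; auto. intros i Hi. rewrite <- (He i Hi).
  destruct (agree_entries _ _ H) as (?&?&?&?&?&?&?&?&?).
  unfold mv; destruct i as [|[|[|i]]]; try lia; congruence.
Qed.

Lemma sse_agree M N lam v : agree3 M N -> single_sign_eig M lam v -> single_sign_eig N lam v.
Proof.
  intros H [H1 (mu1&mu2&w1&w2&E1&E2&P1&P2&D)]. split; [eapply eigpair_agree; eauto|].
  exists mu1, mu2, w1, w2; repeat split; try (eapply eigpair_agree; eauto); auto.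
Qed.

Lemma agree_sym M N : agree3 M N -> agree3 N M.
Proof. intros H i j Hi Hj; symmetry; auto. Qed.

Lemma det_agree M N : agree3 M N -> det3 M = det3 N.
Proof.
  intros H; destruct (agree_entries _ _ H) as (?&?&?&?&?&?&?&?&?).
  unfold det3; congruence.
Qed.

Lemma In6 (P : fn4 -> Prop) a b c d e f :
  P a -> P b -> P c -> P d -> P e -> P f -> forall g, In g (a::b::c::d::e::f::nil) -> P g.
Proof. intros; simpl in *; intuition (subst; auto). Qed.

Definition tA1 := TVar 1. Definition tA2 := TVar 2. Definition tA3 := TMul (TCst (-2)) (TVar 3).

Lemma HA1 : forall a b c d, c01 omegaA a b c d = eval tA1 a b c d. Proof. reflexivity. Qed.
Lemma HA2 : forall a b c d, c02 omegaA a b c d = eval tA2 a b c d. Proof. reflexivity. Qed.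
Lemma HA3 : forall a b c d, c03 omegaA a b c d = eval tA3 a b c d. Proof. reflexivity. Qed.
Lemma HA4 : forall a b c d, c23 omegaA a b c d = eval tA1 a b c d. Proof. reflexivity. Qed.
Lemma HA5 : forall a b c d, c31 omegaA a b c d = eval tA2 a b c d. Proof. reflexivity. Qed.
Lemma HA6 : forall a b c d, c12 omegaA a b c d = eval tA3 a b c d. Proof. reflexivity. Qed.

Lemma closedA : closed_form omegaA.
Proof.
  intros th x1 x2 x3 _.
  repeat first [rewrite (pd_eval _ _ HA1) | rewrite (pd_eval _ _ HA2) | rewrite (pd_eval _ _ HA3) | rewrite (pd_eval _ _ HA4)
    | rewrite (pd_eval _ _ HA5) | rewrite (pd_eval _ _ HA6)].
  simpl; repeat split; ring.
Qed.

Lemma LmatA th : agree3 (Lmat omegaA th) (LA th).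
Proof.
  intros i j Hi Hj. unfold Lmat.
  destruct i as [|[|[|i]]]; try lia; simpl coef;
  [rewrite (pd_eval _ _ HA1) | rewrite (pd_eval _ _ HA2) | rewrite (pd_eval _ _ HA3)];
  destruct j as [|[|[|j]]]; try lia; simpl; ring.
Qed.

Definition e3 (k : nat) : vec3 := fun i => if Nat.eqb i k then 1 else 0.

Lemma sseA th : single_sign_eig (LA th) (-2) (e3 2).
Proof.
  split.
  - split; [right; right; unfold e3; simpl; intro; lra|]. intros i Hi; destruct i as [|[|[|i]]]; try lia;
    unfold mv, LA, e3; simpl; ring.
  - exists 1, 1, (e3 0), (e3 1). repeat split.
    + left; unfold e3; simpl; intro; lra.
    + intros i Hi; destruct i as [|[|[|i]]]; try lia; unfold mv, LA, e3; simpl; ring.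
    + right; left; unfold e3; simpl; intro; lra.
    + intros i Hi; destruct i as [|[|[|i]]]; try lia; unfold mv, LA, e3; simpl; ring.
    + lra.
    + lra.
    + unfold det3cols, det3, e3; simpl; intro; lra.
Qed.

Lemma partA : good_form omegaA /\
   (forall th x1 x2 x3, inD3 x1 x2 x3 ->
      c01 omegaA th x1 x2 x3 = c01 (star3_plus_dth muA_pot) th x1 x2 x3 /\
      c02 omegaA th x1 x2 x3 = c02 (star3_plus_dth muA_pot) th x1 x2 x3 /\
      c03 omegaA th x1 x2 x3 = c03 (star3_plus_dth muA_pot) th x1 x2 x3 /\
      c23 omegaA th x1 x2 x3 = c23 (star3_plus_dth muA_pot) th x1 x2 x3 /\
      c31 omegaA th x1 x2 x3 = c31 (star3_plus_dth muA_pot) th x1 x2 x3 /\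
      c12 omegaA th x1 x2 x3 = c12 (star3_plus_dth muA_pot) th x1 x2 x3) /\
   (forall th i j, (i < 3)%nat -> (j < 3)%nat -> Lmat omegaA th i j = LA th i j) /\
   oriented_splitting (Lmat omegaA).
Proof.
  split; [|split; [|split]].
  - split; [|split; [|split; [|split; [|split]]]].
    + intros f Hf; apply (In6 (fun f => forall th x1 x2 x3, f (th + 2 * PI) x1 x2 x3 = f th x1 x2 x3)) with (7 := Hf);
        intros; reflexivity.
    + intros f Hf; apply (In6 smooth_fn) with (7 := Hf);
        [eapply smooth_eval; exact HA1 | eapply smooth_eval; exact HA2 | eapply smooth_eval; exact HA3
        |eapply smooth_eval; exact HA4 | eapply smooth_eval; exact HA5 | eapply smooth_eval; exact HA6].
    + intros th x1 x2 x3 _; simpl; repeat split; reflexivity.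
    + split; [exact closedA | exact closedA].
    + intros th x1 x2 x3 _; split.
      * intros H. assert (H1 := H _ (or_introl eq_refl)). assert (H2 := H _ (or_intror (or_introl eq_refl))).
        assert (H3 := H _ (or_intror (or_intror (or_introl eq_refl)))). simpl in H1, H2, H3. lra.
      * intros (->&->&->). apply In6; simpl; ring.
    + intros th. rewrite (det_agree _ _ (LmatA th)). unfold det3; simpl; lra.
  - intros th x1 x2 x3 _.
    assert (Hm : forall a b c d, muA_pot a b c d = eval (TAdd (TMul (TCst (/2)) (TAdd (TMul (TVar 1) (TVar 1)) (TMul (TVar 2) (TVar 2)))) (TOpp (TMul (TVar 3) (TVar 3)))) a b c d)
      by (intros; unfold muA_pot; simpl; field).
    unfold star3_plus_dth, omegaA, alpha_comb; cbn [c01 c02 c03 c23 c31 c12].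
    rewrite !(pd_eval _ _ Hm). simpl; repeat split; field.
  - exact LmatA.
  - split.
    + intros th; exists (-2), (e3 2). apply (sse_agree _ _ _ _ (agree_sym _ _ (LmatA th))). apply sseA.
    + exists (fun _ => e3 2). split; [|split].
      * intros i _; apply continuity_const; intros x y; reflexivity.
      * reflexivity.
      * intros t; exists (-2). apply (sse_agree _ _ _ _ (agree_sym _ _ (LmatA t))). apply sseA.
Qed.

Lemma sc1 th : sin th ^ 2 + cos th ^ 2 = 1.
Proof. pose proof (sin2_cos2 th). unfold Rsqr in H. lra. Qed.

Lemma eig_LB Rr th mu w : 0 < Rr < 1 -> eigpair (LB Rr th) mu w -> mu <> Rr ->
  w 2%nat = 0 /\ (cos th - Rr) * w 0%nat + sin th * w 1%nat = mu * w 0%nat /\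
  sin th * w 0%nat - cos th * w 1%nat = mu * w 1%nat /\
  mu ^ 2 + Rr * mu + Rr * cos th - 1 = 0.
Proof.
  intros HR [Hn He] Hmu.
  pose proof (He 0%nat ltac:(lia)) as E0. pose proof (He 1%nat ltac:(lia)) as E1.
  pose proof (He 2%nat ltac:(lia)) as E2.
  unfold mv, LB in E0, E1, E2; simpl in E0, E1, E2.
  pose proof (sc1 th) as Hsc.
  set (c := cos th) in *; set (s := sin th) in *.
  assert (W2 : w 2%nat = 0).
  { assert ((Rr - mu) * w 2%nat = 0) by lra.
    destruct (Rmult_integral _ _ H); [exfalso; lra | auto]. }
  rewrite W2 in E0, E1.
  set (p := w 0%nat) in *; set (q := w 1%nat) in *.
  assert (F0 : (c - Rr) * p + s * q = mu * p) by lra.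
  assert (F1 : s * p - c * q = mu * q) by lra.
  split; [exact W2|split; [exact F0|split; [exact F1|]]].
  set (d := (c - Rr - mu) * (- c - mu) - s * s).
  assert (Dp : d * p = 0).
  { replace (d * p) with ((- c - mu) * ((c - Rr) * p + s * q - mu * p) - s * (s * p - c * q - mu * q))
      by (unfold d; ring). rewrite F0, F1. ring. }
  assert (Dq : d * q = 0).
  { replace (d * q) with ((c - Rr - mu) * (s * p - c * q - mu * q) - s * ((c - Rr) * p + s * q - mu * p))
      by (unfold d; ring). rewrite F0, F1. ring. }
  assert (Hd : d = 0).
  { destruct Hn as [H|[H|H]].
    - destruct (Rmult_integral _ _ Dp); [auto | contradiction].
    - destruct (Rmult_integral _ _ Dq); [auto | contradiction].
    - contradiction. }
  unfold d in Hd. nra.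
Qed.

Lemma det3cols_flat (v w1 w2 : vec3) : w1 2%nat = 0 -> w2 2%nat = 0 ->
  det3cols v w1 w2 = v 2%nat * (w1 0%nat * w2 1%nat - w1 1%nat * w2 0%nat).
Proof. intros H1 H2. unfold det3cols, det3; simpl. rewrite H1, H2. ring. Qed.

Lemma sse_LB Rr th lam v : 0 < Rr < 1 -> single_sign_eig (LB Rr th) lam v ->
  lam < 0 /\ 2 * lam + Rr < 0 /\ v 2%nat = 0 /\
  (cos th - Rr) * v 0%nat + sin th * v 1%nat = lam * v 0%nat /\
  sin th * v 0%nat - cos th * v 1%nat = lam * v 1%nat /\ (v 0%nat <> 0 \/ v 1%nat <> 0).
Proof.
  intros HR [Hv (mu1&mu2&w1&w2&E1&E2&P1&P2&D)].
  pose proof (sc1 th) as Hsc. pose proof (COS_bound th) as Hcb.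
  assert (Hlam : lam < 0).
  { destruct (Rtotal_order lam 0) as [H|[H|H]]; [exact H| subst; lra |].
    exfalso.
    assert (m1 : mu1 < 0) by nra. assert (m2 : mu2 < 0) by nra.
    destruct (eig_LB Rr th mu1 w1 HR E1 ltac:(lra)) as (W1&A1&B1&Q1).
    destruct (eig_LB Rr th mu2 w2 HR E2 ltac:(lra)) as (W2&A2&B2&Q2).
    assert (Hm : mu1 = mu2).
    { assert (HH : (mu1 - mu2) * (mu1 + mu2 + Rr) = 0) by nra.
      destruct (Rmult_integral _ _ HH) as [H0|H0]; [lra|].
      exfalso. assert (mu1 * (mu1 + Rr) = 1 - Rr * cos th) by nra.
      assert (mu1 + Rr = - mu2) by lra. nra. }
    subst mu2.
    set (c := cos th) in *; set (s := sin th) in *.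
    set (cr := w1 0%nat * w2 1%nat - w1 1%nat * w2 0%nat).
    assert (X1 : (c - Rr - mu1) * cr = 0).
    { replace ((c - Rr - mu1) * cr) with
        (w2 1%nat * ((c - Rr) * w1 0%nat + s * w1 1%nat - mu1 * w1 0%nat)
         - w1 1%nat * ((c - Rr) * w2 0%nat + s * w2 1%nat - mu1 * w2 0%nat)) by (unfold cr; ring).
      rewrite A1, A2; ring. }
    assert (X2 : s * cr = 0).
    { replace (s * cr) with
        (w1 0%nat * ((c - Rr) * w2 0%nat + s * w2 1%nat - mu1 * w2 0%nat)
         - w2 0%nat * ((c - Rr) * w1 0%nat + s * w1 1%nat - mu1 * w1 0%nat)) by (unfold cr; ring).
      rewrite A1, A2; ring. }
    assert (X3 : (- c - mu1) * cr = 0).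
    { replace ((- c - mu1) * cr) with
        (w1 0%nat * (s * w2 0%nat - c * w2 1%nat - mu1 * w2 1%nat)
         - w2 0%nat * (s * w1 0%nat - c * w1 1%nat - mu1 * w1 1%nat)) by (unfold cr; ring).
      rewrite B1, B2; ring. }
    assert (Hcr : cr = 0).
    { destruct (Req_dec cr 0) as [|Hne]; [auto|exfalso].
      assert (c - Rr - mu1 = 0) by (destruct (Rmult_integral _ _ X1); auto; contradiction).
      assert (s = 0) by (destruct (Rmult_integral _ _ X2); auto; contradiction).
      assert (- c - mu1 = 0) by (destruct (Rmult_integral _ _ X3); auto; contradiction).
      assert (Rr = 2 * c) by lra. subst s. assert (c * c = 1) by nra. nra. }
    apply D. rewrite det3cols_flat by auto. fold cr. rewrite Hcr. ring. }
  destruct (eig_LB Rr th lam v HR Hv ltac:(lra)) as (V2&A&B&Q).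
  split; [exact Hlam|split; [|split; [exact V2|split; [exact A|split; [exact B|]]]]].
  - assert (lam * (lam + Rr) = 1 - Rr * cos th) by nra. nra.
  - destruct Hv as [[H|[H|H]] _]; first [now left | now right | contradiction].
Qed.

Lemma quad_sign Rr c s lam p q : 2 * lam + Rr < 0 ->
  (c - Rr) * p + s * q = lam * p -> s * p - c * q = lam * q ->
  s * (p * q) <= 0 /\ (s = 0 -> p * q = 0).
Proof.
  intros H2 E1 E2.
  assert (G1 : s * (p * q) = (lam + c) * (q * q)).
  { replace (s * (p * q)) with (q * (s * p - c * q) + c * (q * q)) by ring. rewrite E2. ring. }
  assert (G2 : s * (p * q) = (lam - c + Rr) * (p * q) * 0 + (lam - c + Rr) * (p * p)).
  { replace (s * (p * q)) with (p * ((c - Rr) * p + s * q) - (c - Rr) * (p * p)) by ring.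
    rewrite E1. ring. }
  split.
  - destruct (Rle_dec (lam + c) 0).
    + rewrite G1. pose proof (Rle_0_sqr q); unfold Rsqr in *; nra.
    + rewrite G2. pose proof (Rle_0_sqr p); unfold Rsqr in *; nra.
  - intros Hs. subst s.
    destruct (Req_dec p 0) as [->|Hp]; [ring|].
    destruct (Req_dec q 0) as [->|Hq]; [ring|].
    exfalso.
    assert (lam + c = 0).
    { assert (HH : (lam + c) * (q * q) = 0) by lra.
      destruct (Rmult_integral _ _ HH) as [|H]; auto. exfalso; apply Hq.
      destruct (Rmult_integral _ _ H); auto. }
    assert (lam - c + Rr = 0).
    { assert (HH : (lam - c + Rr) * (p * p) = 0) by lra.
      destruct (Rmult_integral _ _ HH) as [|H']; auto. exfalso; apply Hp.
      destruct (Rmult_integral _ _ H'); auto. }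
    lra.
Qed.

Lemma same_sign (h : R -> R) a b : continuity h -> a < b ->
  (forall t, a <= t <= b -> h t <> 0) -> h a * h b > 0.
Proof.
  intros Hc Hab Hn.
  assert (Ha : h a <> 0) by (apply Hn; lra). assert (Hb : h b <> 0) by (apply Hn; lra).
  destruct (Rtotal_order (h a) 0) as [Ha'|[Ha'|Ha']]; [|contradiction|];
  destruct (Rtotal_order (h b) 0) as [Hb'|[Hb'|Hb']]; try contradiction; try nra.
  - destruct (IVT h a b Hc Hab Ha' Hb') as (z&Hz&Hz0). exfalso; exact (Hn z Hz Hz0).
  - destruct (IVT (- h)%F a b (continuity_opp _ Hc) Hab) as (z&Hz&Hz0);
      unfold opp_fct; try lra. exfalso; apply (Hn z Hz). unfold opp_fct in Hz0; lra.
Qed.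

Definition tB1 Rr := TAdd (TMul (TAdd (TMul (TVar 1) (TCos (TVar 0))) (TMul (TVar 2) (TSin (TVar 0))))
   (TExp (TVar 3))) (TOpp (TMul (TCst Rr) (TVar 1))).
Definition tB2 := TMul (TAdd (TMul (TVar 1) (TSin (TVar 0))) (TOpp (TMul (TVar 2) (TCos (TVar 0)))))
   (TExp (TVar 3)).
Definition tB3 Rr := TMul (TCst Rr) (TVar 3).

Section B.
Variable Rr : R.
Lemma HB1 : forall a b c d, c01 (omegaB Rr) a b c d = eval (tB1 Rr) a b c d.
Proof. intros; simpl; ring. Qed.
Lemma HB2 : forall a b c d, c02 (omegaB Rr) a b c d = eval tB2 a b c d.
Proof. intros; simpl; ring. Qed.
Lemma HB3 : forall a b c d, c03 (omegaB Rr) a b c d = eval (tB3 Rr) a b c d.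
Proof. intros; simpl; ring. Qed.
Lemma HB4 : forall a b c d, c23 (omegaB Rr) a b c d = eval (tB1 Rr) a b c d.
Proof. intros; simpl; ring. Qed.
Lemma HB5 : forall a b c d, c31 (omegaB Rr) a b c d = eval tB2 a b c d.
Proof. intros; simpl; ring. Qed.
Lemma HB6 : forall a b c d, c12 (omegaB Rr) a b c d = eval (tB3 Rr) a b c d.
Proof. intros; simpl; ring. Qed.

Lemma closedB : closed_form (omegaB Rr).
Proof.
  intros th x1 x2 x3 _.
  repeat first [rewrite (pd_eval _ _ HB1) | rewrite (pd_eval _ _ HB2) | rewrite (pd_eval _ _ HB3)
    | rewrite (pd_eval _ _ HB4) | rewrite (pd_eval _ _ HB5) | rewrite (pd_eval _ _ HB6)].
  simpl; repeat split; ring.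
Qed.

Lemma LmatB th : agree3 (Lmat (omegaB Rr) th) (LB Rr th).
Proof.
  intros i j Hi Hj. unfold Lmat.
  destruct i as [|[|[|i]]]; try lia; simpl coef;
  [rewrite (pd_eval _ _ HB1) | rewrite (pd_eval _ _ HB2) | rewrite (pd_eval _ _ HB3)];
  destruct j as [|[|[|j]]]; try lia; simpl; rewrite ?exp_0; ring.
Qed.
End B.

Definition ev3 (a b c : R) : vec3 := fun i => match i with O => a | 1%nat => b | _ => c end.

Lemma splitB Rr th : 0 < Rr < 1 -> exists lam v, single_sign_eig (LB Rr th) lam v.
Proof.
  intros HR. pose proof (sc1 th) as Hsc. pose proof (COS_bound th) as Hcb.
  set (c := cos th) in *; set (s := sin th) in *.
  destruct (Req_dec s 0) as [Hs|Hs].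
  - assert (Hc : c = 1 \/ c = -1).
    { rewrite Hs in Hsc. assert ((c - 1) * (c + 1) = 0) by nra.
      destruct (Rmult_integral _ _ H); [left|right]; lra. }
    destruct Hc as [Hc|Hc].
    + exists (-1), (ev3 0 1 0). split.
      * split; [right; left; simpl; intro; lra|].
        intros i Hi; destruct i as [|[|[|i]]]; try lia; unfold mv, LB, ev3; simpl; fold c s;
          rewrite ?Hs, ?Hc; ring.
      * exists (1 - Rr), Rr, (ev3 1 0 0), (ev3 0 0 1). repeat split.
        -- left; simpl; intro; lra.
        -- intros i Hi; destruct i as [|[|[|i]]]; try lia; unfold mv, LB, ev3; simpl; fold c s;
             rewrite ?Hs, ?Hc; ring.
        -- right; right; simpl; intro; lra.
        -- intros i Hi; destruct i as [|[|[|i]]]; try lia; unfold mv, LB, ev3; simpl; fold c s;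
             rewrite ?Hs, ?Hc; ring.
        -- nra.
        -- nra.
        -- unfold det3cols, det3, ev3; simpl; intro; lra.
    + exists (-1 - Rr), (ev3 1 0 0). split.
      * split; [left; simpl; intro; lra|].
        intros i Hi; destruct i as [|[|[|i]]]; try lia; unfold mv, LB, ev3; simpl; fold c s;
          rewrite ?Hs, ?Hc; ring.
      * exists 1, Rr, (ev3 0 1 0), (ev3 0 0 1). repeat split.
        -- right; left; simpl; intro; lra.
        -- intros i Hi; destruct i as [|[|[|i]]]; try lia; unfold mv, LB, ev3; simpl; fold c s;
             rewrite ?Hs, ?Hc; ring.
        -- right; right; simpl; intro; lra.
        -- intros i Hi; destruct i as [|[|[|i]]]; try lia; unfold mv, LB, ev3; simpl; fold c s;
             rewrite ?Hs, ?Hc; ring.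
        -- nra.
        -- nra.
        -- unfold det3cols, det3, ev3; simpl; intro; lra.
  - set (Dd := Rr * Rr - 4 * (Rr * c - 1)).
    assert (HD : Rr * Rr < Dd) by (unfold Dd; nra).
    set (S := sqrt Dd).
    assert (HS2 : S * S = Dd) by (apply sqrt_sqrt; nra).
    assert (HS0 : 0 <= S) by apply sqrt_pos.
    assert (HSR : Rr < S) by nra.
    set (lam := (- Rr - S) / 2). set (mu := (- Rr + S) / 2).
    assert (Ql : lam ^ 2 + Rr * lam + Rr * c - 1 = 0) by (unfold lam; unfold Dd in HS2; nra).
    assert (Qm : mu ^ 2 + Rr * mu + Rr * c - 1 = 0) by (unfold mu; unfold Dd in HS2; nra).
    assert (Hl : lam < 0) by (unfold lam; lra).
    assert (Hm : 0 < mu) by (unfold mu; lra).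
    exists lam, (ev3 s (lam - c + Rr) 0). split.
    + split; [left; simpl; exact Hs|].
      intros i Hi; destruct i as [|[|[|i]]]; try lia; unfold mv, LB, ev3; simpl; fold c s; nra.
    + exists Rr, mu, (ev3 0 0 1), (ev3 s (mu - c + Rr) 0). repeat split.
      * right; right; simpl; intro; lra.
      * intros i Hi; destruct i as [|[|[|i]]]; try lia; unfold mv, LB, ev3; simpl; fold c s; nra.
      * left; simpl; exact Hs.
      * intros i Hi; destruct i as [|[|[|i]]]; try lia; unfold mv, LB, ev3; simpl; fold c s; nra.
      * nra.
      * nra.
      * unfold det3cols, det3, ev3; simpl. intro H.
        assert (HH : s * (mu - lam) = 0) by lra.
        destruct (Rmult_integral _ _ HH); [contradiction|]. unfold mu, lam in *; lra.
Qed.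

Lemma nontrivB Rr : 0 < Rr < 1 -> ~ line_bundle_trivial (Lmat (omegaB Rr)).
Proof.
  intros HR (v & Hc & Hp & He).
  assert (F : forall t, exists lam, lam < 0 /\ 2 * lam + Rr < 0 /\ v t 2%nat = 0 /\
    (cos t - Rr) * v t 0%nat + sin t * v t 1%nat = lam * v t 0%nat /\
    sin t * v t 0%nat - cos t * v t 1%nat = lam * v t 1%nat /\ (v t 0%nat <> 0 \/ v t 1%nat <> 0)).
  { intros t. destruct (He t) as [lam Hl]. exists lam.
    apply sse_LB; auto. eapply sse_agree; [|exact Hl]. apply LmatB. }
  assert (PP : forall t, exists lam, 2 * lam + Rr < 0 /\
    (cos t - Rr) * v t 0%nat + sin t * v t 1%nat = lam * v t 0%nat /\
    sin t * v t 0%nat - cos t * v t 1%nat = lam * v t 1%nat).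
  { intros t; destruct (F t) as (lam&_&A&_&B&C&_); exists lam; auto. }
  assert (NZ : forall t, v t 0%nat <> 0 \/ v t 1%nat <> 0).
  { intros t; destruct (F t) as (lam&_&_&_&_&_&X); exact X. }
  assert (N1 : forall t, 0 <= t <= PI -> v t 1%nat - v t 0%nat <> 0).
  { intros t Ht Heq. destruct (PP t) as (lam&A&B&C).
    destruct (quad_sign _ _ _ _ _ _ A B C) as [Q1 Q2].
    pose proof (sin_ge_0 t (proj1 Ht) (proj2 Ht)) as Hs.
    assert (Hpq : v t 0%nat * v t 1%nat <= 0).
    { destruct (Req_dec (sin t) 0) as [E|E]; [rewrite (Q2 E); lra|nra]. }
    assert (v t 1%nat = v t 0%nat) by lra. rewrite H in Hpq.
    assert (v t 0%nat = 0) by nra. destruct (NZ t); apply H1; lra. }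
  assert (N2 : forall t, PI <= t <= 2 * PI -> v t 0%nat + v t 1%nat <> 0).
  { intros t Ht Heq. destruct (PP t) as (lam&A&B&C).
    destruct (quad_sign _ _ _ _ _ _ A B C) as [Q1 Q2].
    pose proof (sin_le_0 t (proj1 Ht) (proj2 Ht)) as Hs.
    assert (Hpq : 0 <= v t 0%nat * v t 1%nat).
    { destruct (Req_dec (sin t) 0) as [E|E]; [rewrite (Q2 E); lra|nra]. }
    assert (v t 1%nat = - v t 0%nat) by lra. rewrite H in Hpq.
    assert (v t 0%nat = 0) by nra. destruct (NZ t); apply H1; lra. }
  assert (Z0 : v 0 0%nat = 0).
  { destruct (F 0) as (lam&L&_&_&A&_&_). rewrite cos_0, sin_0 in A.
    assert (HH : (1 - Rr - lam) * v 0 0%nat = 0) by lra.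
    destruct (Rmult_integral _ _ HH); [lra|auto]. }
  assert (Zpi : v PI 1%nat = 0).
  { destruct (F PI) as (lam&L&_&_&_&B&_). rewrite cos_PI, sin_PI in B.
    assert (HH : (1 - lam) * v PI 1%nat = 0) by lra.
    destruct (Rmult_integral _ _ HH); [lra|auto]. }
  assert (Hper : forall i, v (2 * PI) i = v 0 i).
  { intros i. rewrite <- (Hp 0 i). f_equal. ring. }
  pose proof PI_RGT_0 as Hpi.
  assert (S1 := same_sign (fun t => v t 1%nat - v t 0%nat) 0 PI).
  assert (S2 := same_sign (fun t => v t 0%nat + v t 1%nat) PI (2 * PI)).
  simpl in S1, S2.
  assert (C1 : continuity (fun t => v t 1%nat - v t 0%nat)).
  { change (continuity ((fun t => v t 1%nat) - (fun t => v t 0%nat))%F).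
    apply continuity_minus; apply Hc; lia. }
  assert (C2 : continuity (fun t => v t 0%nat + v t 1%nat)).
  { change (continuity ((fun t => v t 0%nat) + (fun t => v t 1%nat))%F).
    apply continuity_plus; apply Hc; lia. }
  specialize (S1 C1 Hpi N1). specialize (S2 C2 ltac:(lra) N2).
  rewrite !Hper, Z0, Zpi in *. nra.
Qed.

Lemma partB Rr : 0 < Rr < 1 ->
   good_form (omegaB Rr) /\
   (forall th i j, (i < 3)%nat -> (j < 3)%nat -> Lmat (omegaB Rr) th i j = LB Rr th i j) /\
   unoriented_splitting (Lmat (omegaB Rr)).
Proof.
  intros HR. split; [|split; [exact (LmatB Rr)|split]].
  - split; [|split; [|split; [|split; [|split]]]].
    + intros f Hf; apply (In6 (fun f => forall th x1 x2 x3, f (th + 2 * PI) x1 x2 x3 = f th x1 x2 x3)) with (7 := Hf);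
        intros; simpl; rewrite ?cos_plus, ?sin_plus, ?cos_2PI, ?sin_2PI; ring.
    + intros f Hf; apply (In6 smooth_fn) with (7 := Hf);
        [eapply smooth_eval; exact (HB1 Rr) | eapply smooth_eval; exact (HB2 Rr) | eapply smooth_eval; exact (HB3 Rr)
        |eapply smooth_eval; exact (HB4 Rr) | eapply smooth_eval; exact (HB5 Rr) | eapply smooth_eval; exact (HB6 Rr)].
    + intros th x1 x2 x3 _; simpl; repeat split; reflexivity.
    + split; [exact (closedB Rr) | exact (closedB Rr)].
    + intros th x1 x2 x3 _; split.
      * intros H. assert (H1 := H _ (or_introl eq_refl)). assert (H2 := H _ (or_intror (or_introl eq_refl))).
        assert (H3 := H _ (or_intror (or_intror (or_introl eq_refl)))). simpl in H1, H2, H3.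
        assert (X3 : x3 = 0) by nra. subst x3. rewrite exp_0 in H1, H2.
        pose proof (sc1 th) as Hsc. pose proof (COS_bound th).
        assert (HH : x1 * (1 - Rr * cos th) = 0).
        { replace (x1 * (1 - Rr * cos th)) with
            (cos th * ((x1 * cos th + x2 * sin th) * 1 - Rr * x1) + sin th * ((x1 * sin th - x2 * cos th) * 1)
             + x1 * (1 - sin th ^ 2 - cos th ^ 2)) by ring.
          rewrite H1, H2. replace (1 - sin th ^ 2 - cos th ^ 2) with 0 by lra. ring. }
        assert (X1 : x1 = 0).
        { destruct (Rmult_integral _ _ HH); auto. nra. }
        subst x1. split; [auto|split; [|auto]].
        assert (x2 * x2 = 0).
        { replace (x2 * x2) with (x2 * x2 * (sin th ^ 2 + cos th ^ 2)) by (rewrite Hsc; ring).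
          replace (x2 * x2 * (sin th ^ 2 + cos th ^ 2)) with
            (x2 * sin th * ((0 * cos th + x2 * sin th) * 1 - Rr * 0) - x2 * cos th * ((0 * sin th - x2 * cos th) * 1)) by ring.
          rewrite H1, H2; ring. }
        nra.
      * intros (->&->&->). apply In6; simpl; ring.
    + intros th. rewrite (det_agree _ _ (LmatB Rr th)). unfold det3, LB; simpl.
      pose proof (sc1 th). pose proof (COS_bound th). intro. nra.
  - intros th. destruct (splitB Rr th HR) as (lam&v&H). exists lam, v.
    eapply sse_agree; [|exact H]. apply agree_sym, LmatB.
  - apply nontrivB; auto.
Qed.

Theorem mainTheorem5 :
  (good_form omegaA /\
   (forall th x1 x2 x3, inD3 x1 x2 x3 ->
      c01 omegaA th x1 x2 x3 = c01 (star3_plus_dth muA_pot) th x1 x2 x3 /\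
      c02 omegaA th x1 x2 x3 = c02 (star3_plus_dth muA_pot) th x1 x2 x3 /\
      c03 omegaA th x1 x2 x3 = c03 (star3_plus_dth muA_pot) th x1 x2 x3 /\
      c23 omegaA th x1 x2 x3 = c23 (star3_plus_dth muA_pot) th x1 x2 x3 /\
      c31 omegaA th x1 x2 x3 = c31 (star3_plus_dth muA_pot) th x1 x2 x3 /\
      c12 omegaA th x1 x2 x3 = c12 (star3_plus_dth muA_pot) th x1 x2 x3) /\
   (forall th i j, (i < 3)%nat -> (j < 3)%nat -> Lmat omegaA th i j = LA th i j) /\
   oriented_splitting (Lmat omegaA)) /\
  (forall Rr, 0 < Rr < 1 ->
   good_form (omegaB Rr) /\
   (forall th i j, (i < 3)%nat -> (j < 3)%nat -> Lmat (omegaB Rr) th i j = LB Rr th i j) /\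
   unoriented_splitting (Lmat (omegaB Rr))).
Proof.
  split; [exact partA | exact partB].
Qed.
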